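(* Assume $C_n>0$ and $\lambda\ge\phi\, n^{1/3}/C_n^{1/3}$ for some constant $\phi>0$. Let $[i_s,i_t]\in\mathcal P$ be a bin of the key partition such that the offline optimal takes the form of Structure 1 or Structure 2 on some sub-interval of $[i_s,i_t]$. Let $\mu_{\mathrm{th}}=\sqrt{\frac{36(B+G)^3C_n^{1/3}\log n}{\phi\, n^{1/3}}}$. If $C_n\le\left(\frac{B^2\phi}{144(B+G)^3\log n}\right)^3 n$, then $$\mathrm{gap}_{\min}(-B,[i_s,i_t])\vee\mathrm{gap}_{\min}(B,[i_s,i_t])\ge\mu_{\mathrm{th}}.$$
   Context: Setting: $n\ge 3$, $B\ge 1$, $G\ge B$, labels $y_1,\dots,y_n\in[-G,G]$; $[a,b]=\{a,\dots,b\}$; $a\vee b=\max\{a,b\}$. Offline optimal: $u_1,\dots,u_n$ is an optimal solution of: minimize $\frac12\sum_{t=1}^n(y_t-\tilde u_t)^2$ subject to $\sum_{t=2}^{n}|\tilde u_t-\tilde u_{t-1}|\le C_n$ and $-B\le\tilde u_t\le B$; with optimal dual variables $\lambda\ge0$ (TV constraint) and $\gamma^\pm_t\ge0$ (box constraints) satisfying the KKT conditions: there are $s_t\in[-1,1]$ with $s_t=\mathrm{sign}(u_{t+1}-u_t)$ whenever $u_{t+1}\ne u_t$, $s_0=s_n=0$, $u_t-y_t=\lambda(s_t-s_{t-1})+\gamma_t^--\gamma_t^+$, and $\lambda(\sum_{t=2}^n|u_t-u_{t-1}|-C_n)=0$, $\gamma_t^-(u_t+B)=0$, $\gamma_t^+(u_t-B)=0$.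 Structure 1 on $[a,b]\subseteq\{2,\dots,n-1\}$: $u_j=u_a\in(-B,B)$ for all $j\in[a,b]$, $u_b>u_{b+1}$ and $u_a>u_{a-1}$. Structure 2 on $[a,b]\subseteq\{2,\dots,n-1\}$: $u_j=u_a\in(-B,B)$ for all $j\in[a,b]$, $u_b<u_{b+1}$ and $u_a<u_{a-1}$. For a bin $[a,b]$ and $\beta\in\mathbb R$, $\mathrm{gap}_{\min}(\beta,[a,b])=\min_{j\in[a,b]}|u_j-\beta|$. Key partition $\mathcal P$: $[n]$ is partitioned greedily into consecutive bins: the first bin starts at $i_s=1$; a bin starting at $i_s$ ends at the largest $i_t\in[i_s,n]$ such that $\sum_{j=i_s+1}^{i_t}|u_j-u_{j-1}|\le B/\sqrt{i_t-i_s+1}$; the next bin starts at $i_t+1$, until $n$ is covered. *)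

(* Defs.v *)
From HB Require Import structures.
From mathcomp Require Import all_boot all_order all_algebra.
From mathcomp Require Import all_classical all_reals all_analysis.
Set Implicit Arguments. Unset Strict Implicit. Unset Printing Implicit Defensive.
Import Order.TTheory GRing.Theory Num.Theory.
Local Open Scope ring_scope.

Section Defs.
Variable R : realType.
Implicit Types (u y v : nat -> R) (a b n : nat) (B beta : R).

Definition tv u a b : R := \sum_(a.+1 <= j < b.+1) `|u j - u j.-1|.

Definition objective n y v : R := 2^-1 * \sum_(1 <= t < n.+1) (y t - v t) ^+ 2.

Definition feasible n C B v : Prop :=
  tv v 1 n <= C /\ (forall t, (1 <= t <= n)%N -> - B <= v t <= B).

Definition offline_optimal n y C B u : Prop :=
  feasible n C B u /\ (forall v, feasible n C B v -> objective n y u <= objective n y v).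

(* KKT conditions with dual variables lam (TV), gm = gamma^-, gp = gamma^+ *)
Definition KKT n y C B u (lam : R) (gm gp : nat -> R) : Prop :=
  0 <= lam /\ (forall t, (1 <= t <= n)%N -> 0 <= gm t /\ 0 <= gp t) /\
  (exists s : nat -> R,
     [/\ s 0%N = 0, s n = 0,
         (forall t, (t <= n)%N -> -1 <= s t <= 1),
         (forall t, (1 <= t < n)%N -> u t.+1 != u t -> s t = Num.sg (u t.+1 - u t)) &
         (forall t, (1 <= t <= n)%N -> u t - y t = lam * (s t - s t.-1) + gm t - gp t)]) /\
  lam * (tv u 1 n - C) = 0 /\
  (forall t, (1 <= t <= n)%N -> gm t * (u t + B) = 0 /\ gp t * (u t - B) = 0).

Definition structure1 n u B a b : Prop :=
  [/\ (2 <= a)%N /\ (a <= b)%N /\ (b <= n.-1)%N,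
      (forall j, (a <= j <= b)%N -> u j = u a),
      - B < u a < B, u b > u b.+1 & u a > u a.-1].

Definition structure2 n u B a b : Prop :=
  [/\ (2 <= a)%N /\ (a <= b)%N /\ (b <= n.-1)%N,
      (forall j, (a <= j <= b)%N -> u j = u a),
      - B < u a < B, u b < u b.+1 & u a < u a.-1].

Definition gap_min u beta a b : R :=
  \big[Num.min/`|u a - beta|]_(a <= j < b.+1) `|u j - beta|.

Definition bin_end n u B a : nat :=
  \max_(a <= b < n.+1 | tv u a b <= B / Num.sqrt ((b - a + 1)%:R)) b.

Inductive key_bin n u B : nat -> nat -> Prop :=
| key_bin_first : key_bin n u B 1 (bin_end n u B 1)
| key_bin_next a b : key_bin n u B a b -> (b < n)%N ->
    key_bin n u B b.+1 (bin_end n u B b.+1).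

End Defs.

(* Main.v *)
Require Import Defs.
From HB Require Import structures.
From mathcomp Require Import all_boot all_order all_algebra.
From mathcomp Require Import all_classical all_reals all_analysis.
Import Order.TTheory GRing.Theory Num.Theory.
Local Open Scope ring_scope.
From mathcomp Require Import ring lra.

Lemma maxP_nat (P : pred nat) a m : (a <= m)%N -> P a ->
  (a <= \max_(a <= b < m.+1 | P b) b <= m)%N /\ P (\max_(a <= b < m.+1 | P b) b)%N.
Proof.
move=> Ham Pa; elim: m Ham => [|m IH] Ham.
  move: Ham; rewrite leqn0 => /eqP Ea; subst a.
  by rewrite big_mkcond big_nat1 Pa /=.
rewrite big_mkcond big_nat_recr //= -big_mkcond.
case: (ltngtP a m.+1) Ham => // [Ham|Eam] _.
  have [/andP[h1 h2] h3] := IH Ham.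
  case Pm: (P m.+1).
    rewrite maxnE subnKC ?(leq_trans h2) //; split=> //; apply/andP; split => //.
    exact: leq_trans (ltnW Ham).
  rewrite maxn0; split=> //; apply/andP; split => //; exact: leq_trans h2 _.
rewrite -Eam big_geq // Pa max0n; split => //; by rewrite leqnn.
Qed.

Lemma tv_ge0 (R : realType) (u : nat -> R) a b : 0 <= tv u a b.
Proof. by rewrite /tv; apply: sumr_ge0 => i _. Qed.

Lemma tv_mono (R : realType) (u : nat -> R) a k b : (k <= b)%N -> tv u a k <= tv u a b.
Proof.
move=> kb; elim: b kb => [|b IH] kb.
  by move: kb; rewrite leqn0 => /eqP ->.
case: (ltngtP k b.+1) kb => // [kb|->] _; last by [].
apply: le_trans (IH kb) _.
rewrite /tv.
case: (leqP a.+1 b.+1) => hab.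
  by rewrite [in X in _ <= X]big_nat_recr //= lerDl.
by rewrite !big_geq // ltnW.
Qed.

Lemma tv_diff (R : realType) (u : nat -> R) a j k : (a <= j <= k)%N ->
  `|u k - u j| <= tv u a k.
Proof.
elim: k => [|k IH] /andP[aj jk].
  by move: jk; rewrite leqn0 => /eqP ->; rewrite subrr normr0 tv_ge0.
case: (ltngtP j k.+1) jk => // [jk|->] _; last by rewrite subrr normr0 tv_ge0.
have IH' := IH (introT andP (conj aj jk)).
rewrite /tv big_nat_recr /=; last by rewrite ltnS (leq_trans aj jk).
rewrite -/(tv u a k) addrC /=.
rewrite (_ : u k.+1 - u j = (u k.+1 - u k) + (u k - u j)); last by rewrite addrA subrK.
by apply: le_trans (ler_normD _ _) _; rewrite lerD2l.
Qed.

Lemma bigmin_ge (R : realType) (x x0 : R) (F : nat -> R) a b :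
  x <= x0 -> (forall i, (a <= i < b)%N -> x <= F i) ->
  x <= \big[Num.min/x0]_(a <= i < b) F i.
Proof.
move=> h0 hF; rewrite big_nat_cond.
apply: (big_ind (fun v => x <= v)) => //.
  by move=> p q hp hq; rewrite le_min hp hq.
by move=> i /andP[hi _]; apply: hF.
Qed.

Lemma bin_end_prop (R : realType) n (u : nat -> R) B a : 0 <= B -> (a <= n)%N ->
  (a <= bin_end n u B a <= n)%N /\ tv u a (bin_end n u B a) <= B.
Proof.
move=> B0 an.
have Pa : tv u a a <= B / Num.sqrt ((a - a + 1)%:R).
  by rewrite /tv big_geq // subnn add0n sqrtr1 divr1.
have [h1 h2] := maxP_nat (fun b => tv u a b <= B / Num.sqrt ((b - a + 1)%:R)) a n an Pa.
rewrite /bin_end; split => //.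
apply: le_trans h2 _.
have s1 : 1 <= Num.sqrt ((\max_(a <= b < n.+1 | tv u a b <= B / Num.sqrt ((b - a + 1)%:R)) b - a + 1)%:R : R).
  by rewrite -[X in X <= _]sqrtr1 ler_sqrt // addn1 ler1n.
rewrite ler_pdivrMr ?(lt_le_trans ltr01) //.
exact: ler_peMr.
Qed.

Lemma bin_prop (R : realType) n (u : nat -> R) B a b : (1 <= n)%N -> 0 <= B ->
  key_bin n u B a b -> (1 <= a)%N /\ (a <= b <= n)%N /\ tv u a b <= B.
Proof.
move=> n1 B0; elim => [|a' b' _ _ hb].
  by have [h1 h2] := @bin_end_prop _ n u B 1 B0 n1.
by have [h1 h2] := @bin_end_prop _ n u B b'.+1 B0 hb.
Qed.

Lemma mu_bound (R : realType) (n : nat) (B G C phi : R) :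
  (3 <= n)%N -> 1 <= B -> B <= G -> 0 < C -> 0 < phi ->
  C <= (B ^+ 2 * phi / (144%:R * (B + G) ^+ 3 * ln (n%:R : R))) ^+ 3 * n%:R ->
  Num.sqrt (36%:R * (B + G) ^+ 3 * C `^ (3%:R^-1) * ln (n%:R : R)
            / (phi * n%:R `^ (3%:R^-1))) <= B / 2.
Proof.
move=> n3 B1 BG C0 phi0 hC.
have B0 : 0 < B by apply: lt_le_trans B1; exact: ltr01.
have L0 : 0 < ln (n%:R : R) by apply: ln_gt0; rewrite ltr1n; exact: leq_trans n3.
have S0 : 0 < (B + G) ^+ 3 by apply: exprn_gt0; lra.
have N0 : 0 < (n%:R : R) `^ (3%:R^-1) by apply: powR_gt0; rewrite ltr0n; exact: leq_trans n3.
set K := B ^+ 2 * phi / (144%:R * (B + G) ^+ 3 * ln (n%:R : R)).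
have K0 : 0 < K by rewrite /K; apply: divr_gt0; [apply: mulr_gt0 => //; exact: exprn_gt0| apply: mulr_gt0 => //; apply: mulr_gt0 => //].
have hC3 : C `^ (3%:R^-1) <= K * (n%:R : R) `^ (3%:R^-1).
  have -> : K = (K ^+ 3) `^ (3%:R^-1).
    by rewrite -powR_mulrn ?(ltW K0) // -powRrM mulfV ?powRr1 ?(ltW K0) // pnatr_eq0.
  rewrite -powRM ?exprn_ge0 ?(ltW K0) //.
  apply: ge0_ler_powR => //; rewrite ?nnegrE ?(ltW C0) //.
  by apply: mulr_ge0; [apply: exprn_ge0; exact: ltW|].
have -> : B / 2 = Num.sqrt ((B / 2) ^+ 2) by rewrite sqrtr_sqr ger0_norm //; lra.
rewrite ler_sqrt; last by apply: exprn_ge0; lra.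
rewrite ler_pdivrMr; last exact: mulr_gt0.
apply: le_trans (_ : 36%:R * (B + G) ^+ 3 * (K * (n%:R : R) `^ (3%:R^-1)) * ln (n%:R : R) <= _).
  rewrite ler_pM2r // ler_pM2l //; apply: mulr_gt0 => //.
rewrite le_eqVlt; apply/orP; left; apply/eqP; rewrite /K; field.
apply/andP; split; first by rewrite gt_eqF. by apply/eqP; lra.
Qed.

Lemma pair_bound (R : realType) (u : nat -> R) B a b j k :
  tv u a b <= B -> (a <= j <= b)%N -> (a <= k <= b)%N ->
  B - `|u j - - B| <= `|u k - B|.
Proof.
move=> htv /andP[aj jb] /andP[ak kb].
have hd : `|u j - u k| <= B.
  case: (leqP j k) => jk.
    rewrite distrC; apply: le_trans (@tv_diff _ u a j k (introT andP (conj aj jk))) _.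
    exact: le_trans (@tv_mono _ u a k b kb) htv.
  apply: le_trans (@tv_diff _ u a k j (introT andP (conj ak (ltnW jk)))) _.
  exact: le_trans (@tv_mono _ u a j b jb) htv.
have := ler_normD (u j - - B) (B - u k).
have -> : u j - - B + (B - u k) = (u j - u k) + 2 * B by ring.
rewrite distrC [`|B - u k|]distrC.
move: hd; set d := u j - u k => hd.
have h2 : 2 * B - `|d| <= `|d + 2 * B|.
  have := ler_normB (d + 2 * B) d.
  have -> : d + 2 * B - d = 2 * B by ring.
  have := ler_norm (2 * B). lra.
have Bge : 0 <= B by apply: le_trans hd; exact: normr_ge0.
idtac.
lra.
Qed.

Theorem lemma7 (R : realType) (n : nat) (B G C phi lam : R)
  (y u gm gp : nat -> R) (i_s i_t : nat) :
  (3 <= n)%N -> 1 <= B -> B <= G ->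
  (forall t, (1 <= t <= n)%N -> - G <= y t <= G) ->
  offline_optimal n y C B u ->
  KKT n y C B u lam gm gp ->
  0 < C -> 0 < phi ->
  lam >= phi * (n%:R `^ (3%:R^-1)) / (C `^ (3%:R^-1)) ->
  key_bin n u B i_s i_t ->
  (exists a b, [/\ (i_s <= a)%N, (b <= i_t)%N &
       (structure1 n u B a b \/ structure2 n u B a b)]) ->
  C <= (B ^+ 2 * phi / (144%:R * (B + G) ^+ 3 * ln (n%:R : R))) ^+ 3 * n%:R ->
  Num.sqrt (36%:R * (B + G) ^+ 3 * C `^ (3%:R^-1) * ln (n%:R : R)
            / (phi * n%:R `^ (3%:R^-1)))
  <= Num.max (gap_min u (- B) i_s i_t) (gap_min u B i_s i_t).
Proof.
move=> n3 B1 BG _ _ _ C0 phi0 _ hbin _ hC.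
apply: le_trans (@mu_bound _ n B G C phi n3 B1 BG C0 phi0 hC) _.
have B0 : 0 <= B by apply: le_trans B1; exact: ler01.
have [_ [/andP[st tn] htv]] := @bin_prop _ n u B i_s i_t (leq_trans (isT : (1 <= 3)%N) n3) B0 hbin.
have hsum : B - gap_min u B i_s i_t <= gap_min u (- B) i_s i_t.
  apply: bigmin_ge.
    rewrite lerBlDr addrC -lerBlDr; apply: bigmin_ge.
      by apply: (@pair_bound _ u B i_s i_t _ _ htv); rewrite leqnn.
    move=> k /andP[sk kt]; apply: (@pair_bound _ u B i_s i_t _ _ htv); rewrite ?leqnn //.
    by rewrite sk.
  move=> j /andP[sj jt]; rewrite lerBlDr addrC -lerBlDr; apply: bigmin_ge.
    by apply: (@pair_bound _ u B i_s i_t _ _ htv); rewrite ?sj ?leqnn.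
  by move=> k /andP[sk kt]; apply: (@pair_bound _ u B i_s i_t _ _ htv); rewrite ?sj ?sk.
case: (leP (gap_min u (- B) i_s i_t) (gap_min u B i_s i_t)) => h; lra.
Qed.
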